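(* Let $n$ be a positive integer. (i) The path $P_n$ of order $n$ belongs to $\mathcal U$ if and only if $n\in\{1,2,3,4,8\}$. (ii) The cycle $C_n$ (for $n\ge 3$) belongs to $\mathcal U$ if and only if $n\in\{3,4,5,6,7,8,10,14\}$.
   Context: All graphs are finite and simple. A set $P\subseteq V(G)$ is an open packing if no two distinct vertices of $P$ have a common neighbor; it is maximal if maximal under inclusion among open packings. $\rho^o(G)$ is the maximum size of an open packing and $\rho^o_L(G)$ the minimum size of a maximal open packing; $\mathcal U$ is the class of graphs with $\rho^o_L(G)=\rho^o(G)$. *)

(* Defs.v *)
From mathcomp Require Import all_boot.
Set Implicit Arguments. Unset Strict Implicit. Unset Printing Implicit Defensive.

(* A finite simple graph: vertex type T : finType, adjacency e : rel T,
   assumed symmetric and irreflexive where relevant. *)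

Definition open_nbhd (T : finType) (e : rel T) (v : T) : {set T} := [set u | e v u].

Definition open_packing (T : finType) (e : rel T) (P : {set T}) : bool :=
  [forall x in P, forall y in P,
     (x != y) ==> [disjoint open_nbhd e x & open_nbhd e y]].

Definition maximal_open_packing (T : finType) (e : rel T) (P : {set T}) : bool :=
  open_packing e P &&
  [forall Q : {set T}, (open_packing e Q && (P \subset Q)) ==> (Q == P)].

Definition rho_o (T : finType) (e : rel T) : nat :=
  \max_(P : {set T} | open_packing e P) #|P|.

(* rho^o_L(G): minimum size of a maximal open packing.
   Maximal open packings exist (extend set0); the bound #|T| is never
   attained strictly above the true minimum. *)
Definition rho_oL (T : finType) (e : rel T) : nat :=
  \big[minn/#|T|]_(P : {set T} | maximal_open_packing e P) #|P|.

Definition in_U (T : finType) (e : rel T) : Prop := rho_oL e = rho_o e.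

Definition path_rel (n : nat) : rel 'I_n :=
  fun i j => (i.+1 == j :> nat) || (j.+1 == i :> nat).

(* cycle C_n on vertices 0..n-1 (intended for n >= 3) *)
Definition cycle_rel (n : nat) : rel 'I_n :=
  fun i j => (i.+1 %% n == j :> nat) || (j.+1 %% n == i :> nat).
Arguments path_rel n : clear implicits.
Arguments cycle_rel n : clear implicits.

(* Main.v *)
Require Import Defs.
From mathcomp Require Import all_boot zify.
Set Implicit Arguments. Unset Strict Implicit. Unset Printing Implicit Defensive.


Definition conf (T : finType) (e : rel T) (x y : T) :=
  (x != y) && [exists z, e x z && e y z].

Lemma confC (T : finType) (e : rel T) x y : conf e x y = conf e y x.
Proof.
rewrite /conf eq_sym; congr (_ && _).
by apply/existsP/existsP => -[z]; rewrite andbC; exists z.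
Qed.

Lemma disjE (T : finType) (e : rel T) x y :
  [disjoint open_nbhd e x & open_nbhd e y] = ~~ [exists z, e x z && e y z].
Proof.
apply/idP/idP.
- move=> H; apply/existsP => -[z /andP [h1 h2]].
  by have := disjointFr H (_ : z \in open_nbhd e x); rewrite !inE h1 h2 => /(_ isT).
- move=> H; apply/pred0P => z /=; rewrite /open_nbhd !inE.
  apply/negbTE/negP => /andP [h1 h2]; move/negP: H; apply; apply/existsP; exists z; by rewrite h1 h2.
Qed.

Lemma packingE (T : finType) (e : rel T) (P : {set T}) :
  open_packing e P <-> (forall x y, x \in P -> y \in P -> ~~ conf e x y).
Proof.
rewrite /open_packing; split.
- move=> /forall_inP H x y xP yP; have /forall_inP H2 := H x xP.
  have := H2 y yP; rewrite disjE /conf; by case: (x != y).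
- move=> H; apply/forall_inP => x xP; apply/forall_inP => y yP.
  have := H x y xP yP; rewrite disjE /conf; by case: (x != y).
Qed.

Lemma maxE (T : finType) (e : rel T) (P : {set T}) :
  maximal_open_packing e P ->
  forall v, v \notin P -> exists2 p, p \in P & conf e p v.
Proof.
case/andP => /packingE HP /forallP HM v vP.
case: (boolP [exists p in P, conf e p v]) => [/exists_inP [p pP c]|H].
  by exists p.
exfalso; have := HM (v |: P).
have -> : P \subset v |: P by apply/subsetP => x xP; rewrite inE xP orbT.
have -> : (v |: P == P) = false.
  apply/negP => /eqP E; by move: vP; rewrite -E setU11.
have -> // : open_packing e (v |: P).
apply/packingE => x y; rewrite !inE => /orP [/eqP ->|xP] /orP [/eqP ->|yP].
- by move=> *; rewrite /conf eqxx.
- rewrite confC; apply/negP => c; move/exists_inP: H; apply; by exists y.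
- apply/negP => c; move/exists_inP: H; apply; by exists x.
- exact: HP.
Qed.

Lemma maxI (T : finType) (e : rel T) (P : {set T}) :
  open_packing e P ->
  (forall v, v \notin P -> exists2 p, p \in P & conf e p v) ->
  maximal_open_packing e P.
Proof.
move=> HP HD; apply/andP; split => //; apply/forallP => Q.
apply/implyP => /andP [/packingE HQ sPQ]; rewrite eqEsubset sPQ andbT.
apply/subsetP => v vQ; apply/negPn/negP => vP.
have [p pP c] := HD v vP.
have := HQ p v (subsetP sPQ p pP) vQ; by rewrite c.
Qed.

Lemma rho_o_ub (T : finType) (e : rel T) K :
  (forall Q, open_packing e Q -> #|Q| <= K) -> rho_o e <= K.
Proof. move=> H; apply/bigmax_leqP => Q; exact: H. Qed.

Lemma rho_o_lb (T : finType) (e : rel T) Q :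
  open_packing e Q -> #|Q| <= rho_o e.
Proof. move=> H; rewrite /rho_o; exact: (@leq_bigmax_cond _ (fun P : {set T} => open_packing e P) (fun P : {set T} => #|P|) Q H). Qed.

Lemma bigmin_le (I : eqType) (r : seq I) (p : pred I) (F : I -> nat) (d : nat) i :
  i \in r -> p i -> \big[minn/d]_(j <- r | p j) F j <= F i.
Proof.
elim: r => // x r IH; rewrite inE big_cons => /orP [/eqP <- -> | ir pi].
  exact: geq_minl.
case: (p x); [exact: leq_trans (geq_minr _ _) (IH ir pi) | exact: IH].
Qed.

Lemma rho_oL_ub (T : finType) (e : rel T) P :
  maximal_open_packing e P -> rho_oL e <= #|P|.
Proof. move=> H; rewrite /rho_oL; apply: bigmin_le => //; exact: mem_index_enum. Qed.

Lemma rho_oL_lb (T : finType) (e : rel T) K :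
  (forall P, maximal_open_packing e P -> K <= #|P|) -> K <= #|T| -> K <= rho_oL e.
Proof.
move=> H HT; rewrite /rho_oL; elim/big_ind: _ => //.
by move=> x y hx hy; rewrite leq_min hx hy.
Qed.

Lemma rho_oL_le (T : finType) (e : rel T) : rho_oL e <= rho_o e.
Proof.
have p0 : open_packing e set0 by apply/packingE => x y; rewrite inE.
have h0 : 0 < #|(fun P : {set T} => open_packing e P)|.
  by apply/card_gt0P; exists set0.
have [Q HQ E] := @eq_bigmax_cond _ (fun P : {set T} => open_packing e P)
   (fun P : {set T} => #|P|) h0.
rewrite /rho_o E; apply: rho_oL_ub; apply/andP; split => //.
apply/forallP => R; apply/implyP => /andP [HR sQR].
rewrite eq_sym eqEcard sQR /=.
have := @leq_bigmax_cond _ (fun P : {set T} => open_packing e P) (fun P : {set T} => #|P|) R HR.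
by rewrite E.
Qed.

Lemma in_U_intro (T : finType) (e : rel T) K :
  (forall Q, open_packing e Q -> #|Q| <= K) ->
  (forall P, maximal_open_packing e P -> K <= #|P|) -> K <= #|T| -> in_U e.
Proof.
move=> H1 H2 H3; rewrite /in_U; apply/eqP; rewrite eqn_leq rho_oL_le /=.
exact: leq_trans (rho_o_ub H1) (rho_oL_lb H2 H3).
Qed.

Lemma not_in_U (T : finType) (e : rel T) P Q :
  maximal_open_packing e P -> open_packing e Q -> #|P| < #|Q| -> ~ in_U e.
Proof.
move=> HP HQ lt; rewrite /in_U => E.
have := leq_ltn_trans (rho_oL_ub HP) (leq_trans lt (rho_o_lb HQ)).
by rewrite E ltnn.
Qed.

Lemma card_count n (p : pred nat) : #|[set i : 'I_n | p i]| = count p (iota 0 n).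
Proof.
rewrite cardE /enum_mem size_filter -val_enum_ord count_map enumT.
by apply: eq_count => i; rewrite /= inE.
Qed.

Lemma ord_neq n (x y : 'I_n) : (x != y) = ((x : nat) != y).
Proof. by []. Qed.

Lemma path_conf n (x y : 'I_n) :
  conf (path_rel n) x y = ((x : nat) + 2 == y) || ((y : nat) + 2 == x).
Proof.
apply/idP/idP.
- case/andP => neq /existsP [z]; rewrite /path_rel ord_neq in neq *.
  move: neq; lia.
- have xn := ltn_ord x; have yn := ltn_ord y.
  move=> H; apply/andP; split; first by rewrite ord_neq; lia.
  case/orP: H => /eqP H.
  + have zn : x.+1 < n by lia.
    apply/existsP; exists (Ordinal zn); rewrite /path_rel /=; lia.
  + have zn : y.+1 < n by lia.
    apply/existsP; exists (Ordinal zn); rewrite /path_rel /=; lia.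
Qed.

Lemma modS_small n x : x < n -> x.+1 %% n = if x.+1 == n then 0 else x.+1.
Proof.
move=> h; case: eqP => [->|ne]; first exact: modnn.
by rewrite modn_small //; lia.
Qed.

Lemma cycle_adj n (x y : 'I_n) :
  cycle_rel n x y = [|| (x : nat).+1 == y, (x : nat).+1 == y + n,
                        (y : nat).+1 == x | (y : nat).+1 == x + n].
Proof.
have xn := ltn_ord x; have yn := ltn_ord y.
rewrite /cycle_rel !modS_small //.
case: ifP => hx; case: ifP => hy; lia.
Qed.

Lemma cycle_conf n (x y : 'I_n) : 3 <= n ->
  conf (cycle_rel n) x y = ((x : nat) != y) &&
    [|| (x : nat) + 2 == y, (x : nat) + 2 == y + n,
        (y : nat) + 2 == x | (y : nat) + 2 == x + n].
Proof.
move=> n3; have xn := ltn_ord x; have yn := ltn_ord y.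
rewrite /conf ord_neq; case: (boolP ((x : nat) != y)) => //= neq.
apply/existsP/idP.
- case=> z; rewrite !cycle_adj; have zn := ltn_ord z; move: neq; lia.
- have n0 : 0 < n by lia.
  move=> H.
  case/orP: (orbN (((x : nat) + 2 == y) || ((x : nat) + 2 == y + n))) => h.
  + exists (Ordinal (ltn_pmod (x : nat).+1 n0)); rewrite !cycle_adj /=.
    rewrite modS_small //; case: ifP; move: H h neq; lia.
  + exists (Ordinal (ltn_pmod (y : nat).+1 n0)); rewrite !cycle_adj /=.
    rewrite modS_small //; case: ifP; move: H h neq; lia.
Qed.

Lemma block_U (T : finType) (e : rel T) k (f : T -> 'I_k) :
  (forall x y, f x = f y -> x != y -> conf e x y) ->
  (forall j, exists a, f a = j /\ forall v, conf e a v -> f v = j) ->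
  k <= #|T| -> in_U e.
Proof.
move=> H1 H2 H3; apply: (in_U_intro (K := k)) => //.
- move=> Q /packingE HQ.
  have <- : #|f @: Q| = #|Q|.
    apply: card_in_imset => x y xQ yQ E; apply/eqP/negPn/negP => ne.
    by have := HQ x y xQ yQ; rewrite H1.
  by apply: leq_trans (max_card _) _; rewrite card_ord.
- move=> P HP; apply: leq_trans (leq_imset_card f P).
  have hk : #|[set: 'I_k]| <= #|f @: P|.
    apply: subset_leq_card; apply/subsetP => j _.
    have [a [fa Ha]] := H2 j.
    case: (boolP (a \in P)) => aP; first by rewrite -fa imset_f.
    have [p pP c] := maxE HP aP.
    rewrite -(Ha p); [exact: imset_f | by rewrite confC].
  by move: hk; rewrite cardsT card_ord.
Qed.

Lemma path_U n k :
  (forall x y, x < n -> y < n -> x %/ 4 * 2 + x %% 2 = y %/ 4 * 2 + y %% 2 -> x <> y ->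
     x + 2 = y \/ y + 2 = x) ->
  (forall j, j < k -> (j + 4 * (j %/ 2)) < n /\
     (let a := (j + 4 * (j %/ 2)) in
     a %/ 4 * 2 + a %% 2 = j /\ forall v, v < n -> (a + 2 = v \/ v + 2 = a) ->
       v %/ 4 * 2 + v %% 2 = j)) ->
  (forall x, x < n -> x %/ 4 * 2 + x %% 2 < k) -> k <= n ->
  in_U (path_rel n).
Proof.
move=> HA HB HC HD.
have fk (x : 'I_n) : x %/ 4 * 2 + x %% 2 < k by apply: HC.
apply: (@block_U _ _ k (fun x : 'I_n => Ordinal (fk x))).
- move=> x y /(congr1 val) /= E ne; rewrite path_conf.
  rewrite ord_neq in ne; move/eqP: ne => ne.
  have [h|h] := HA x y (ltn_ord x) (ltn_ord y) E ne; apply/orP; [left|right]; exact/eqP.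
- move=> j; have [an [fa Hv]] := HB j (ltn_ord j).
  exists (Ordinal an); split; first by apply: val_inj.
  move=> v; rewrite path_conf => c; apply: val_inj => /=.
  apply: Hv; first exact: ltn_ord. by case/orP: c => /eqP h; [left|right].
- by rewrite card_ord.
Qed.

Ltac path_tac :=
  [> move=> x y *; lia
  | move=> j hj; split; [lia | cbv zeta; split; [lia | move=> v *; lia]]
  | move=> x *; lia
  | lia].

Lemma path_in_U_8 : in_U (path_rel 8).
Proof. apply: (@path_U 8 4); path_tac. Qed.
Lemma path_in_U_4 : in_U (path_rel 4).
Proof. apply: (@path_U 4 2); path_tac. Qed.
Lemma path_in_U_3 : in_U (path_rel 3).
Proof. apply: (@path_U 3 2); path_tac. Qed.
Lemma path_in_U_2 : in_U (path_rel 2).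
Proof. apply: (@path_U 2 2); path_tac. Qed.
Lemma path_in_U_1 : in_U (path_rel 1).
Proof. apply: (@path_U 1 1); path_tac. Qed.

Lemma mod2_small n x : x < n -> 2 <= n ->
  (x + 2) %% n = if x + 2 < n then x + 2 else x + 2 - n.
Proof.
move=> xn n2; case: ifP => h; first by rewrite modn_small.
have -> : x + 2 = (x + 2 - n) + n by lia.
rewrite modnDr modn_small; lia.
Qed.

Lemma n3_pos n : 3 <= n -> 0 < n.
Proof. lia. Qed.

Lemma cyc_bounds n (n3 : 3 <= n) (C : {set 'I_n}) :
  (forall x : 'I_n, (Ordinal (ltn_pmod (x + 2) (n3_pos n3)) \in C) = (x \in C)) ->
  (forall Q, open_packing (cycle_rel n) Q -> 2 * #|Q :&: C| <= #|C|) /\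
  (forall P, maximal_open_packing (cycle_rel n) P -> #|C| <= 3 * #|P :&: C|).
Proof.
set n0 := n3_pos n3.
set g := fun x : 'I_n => Ordinal (ltn_pmod (x + 2) n0) => HC.
have gv (x : 'I_n) : nat_of_ord (g x) = if x + 2 < n then x + 2 else x + 2 - n.
  by rewrite /= mod2_small //; lia.
have ginj : injective g.
  move=> x y /(congr1 (@nat_of_ord n)); rewrite !gv => E; apply: ord_inj.
  have := ltn_ord x; have := ltn_ord y; move: E; case: ifP; case: ifP; lia.
have cg (x : 'I_n) : conf (cycle_rel n) x (g x).
  rewrite cycle_conf // gv; have := ltn_ord x; case: ifP; lia.
split.
- move=> Q /packingE HQ.
  have s : g @: (Q :&: C) \subset C :\: Q.
    apply/subsetP => y /imsetP [x]; rewrite !inE => /andP [xQ xC] ->.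
    rewrite HC xC andbT; apply/negP => gQ.
    by have := HQ x (g x) xQ gQ; rewrite cg.
  have := subset_leq_card s; rewrite card_in_imset; last by move=> ? ? _ _; exact: ginj.
  have := cardsID Q C; rewrite [C :&: Q]setIC => <- le; by rewrite mul2n -addnn leq_add2l.
- move=> P HP.
  have s : C \subset (P :&: C) :|: g @: (P :&: C) :|: g @^-1: (P :&: C).
    apply/subsetP => v vC; rewrite !inE vC andbT.
    case: (boolP (v \in P)) => //= vP.
    have [p pP c] := maxE HP vP.
    move: c; rewrite cycle_conf // => /andP [ne c].
    have := ltn_ord p; have := ltn_ord v; move=> vn pn.
    case/orP: (orbN (((p : nat) + 2 == v) || ((p : nat) + 2 == v + n))) => h.
    + have E : v = g p by apply: ord_inj; rewrite gv; case: ifP; move: h; lia.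
      apply/orP; left; apply/imsetP; exists p => //.
      rewrite inE pP /= -HC; change (g p \in C); by rewrite -E.
    + have E : p = g v by apply: ord_inj; rewrite gv; case: ifP; move: h c ne; lia.
      by rewrite -[g v \in C]/(Ordinal (ltn_pmod (v + 2) n0) \in C) HC vC -E pP orbT.
  have := subset_leq_card s.
  have := (leq_card_setU (P :&: C :|: g @: (P :&: C)) (g @^-1: (P :&: C))).1.
  have := (leq_card_setU (P :&: C) (g @: (P :&: C))).1.
  have := leq_imset_card g (P :&: C).
  rewrite card_preimset //.
  set a := #|P :&: C|; set b := #|g @: (P :&: C)|.
  set c := #|P :&: C :|: g @: (P :&: C)|.
  set d := #|P :&: C :|: g @: (P :&: C) :|: g @^-1: (P :&: C)|.
  lia.
Qed.

Lemma count_iotaS (p : pred nat) n : count p (iota 0 n.+1) = count p (iota 0 n) + p n.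
Proof. by rewrite -addn1 iotaD count_cat /= addn0. Qed.

Lemma cyc_U_all n (n3 : 3 <= n) : n %/ 2 <= (n + 2) %/ 3 -> in_U (cycle_rel n).
Proof.
move=> hn.
have HT (x : 'I_n) : (Ordinal (ltn_pmod (x + 2) (n3_pos n3)) \in [set: 'I_n]) = (x \in [set: 'I_n]).
  by rewrite !inE.
have [h1 h2] := cyc_bounds HT.
apply: (in_U_intro (K := n %/ 2)).
- move=> Q /h1; rewrite setIT cardsT card_ord; lia.
- move=> P /h2; rewrite setIT cardsT card_ord; lia.
- rewrite card_ord; lia.
Qed.

Lemma cyc_U_even n (n3 : 3 <= n) : n %% 2 = 0 ->
  2 * (n %/ 2 %/ 2) <= 2 * ((n %/ 2 + 2) %/ 3) -> in_U (cycle_rel n).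
Proof.
move=> ev hn.
set C0 := [set x : 'I_n | x %% 2 == 0].
have HC0 (x : 'I_n) : (Ordinal (ltn_pmod (x + 2) (n3_pos n3)) \in C0) = (x \in C0).
  rewrite !inE /= mod2_small //; last lia.
  have := ltn_ord x; case: ifP; lia.
have HC1 (x : 'I_n) : (Ordinal (ltn_pmod (x + 2) (n3_pos n3)) \in ~: C0) = (x \in ~: C0).
  by rewrite !in_setC HC0.
have cC0 : #|C0| = n %/ 2.
  rewrite /C0 (card_count n (fun x => x %% 2 == 0)).
  suff -> : forall k, count (fun x => x %% 2 == 0) (iota 0 k) = k.+1 %/ 2 by lia.
  elim=> // k IH; rewrite count_iotaS IH /=; lia.
have cC1 : #|~: C0| = n %/ 2 by rewrite cardsCs setCK card_ord cC0; lia.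
have [h1 h2] := cyc_bounds HC0.
have [h3 h4] := cyc_bounds HC1.
apply: (in_U_intro (K := 2 * (n %/ 2 %/ 2))).
- move=> Q HQ; have := h1 Q HQ; have := h3 Q HQ.
  have := cardsID C0 Q; rewrite setDE cC0 cC1.
  set a := #|Q :&: C0|; set b := #|Q :&: ~: C0|; lia.
- move=> P HP; have := h2 P HP; have := h4 P HP.
  have := cardsID C0 P; rewrite setDE cC0 cC1.
  set a := #|P :&: C0|; set b := #|P :&: ~: C0|; lia.
- rewrite card_ord; lia.
Qed.

Lemma cyc_in_U n : n \in [:: 3; 4; 5; 6; 7; 8; 10; 14] -> in_U (cycle_rel n).
Proof.
rewrite !inE => /orP [/eqP -> | /orP [/eqP -> | /orP [/eqP -> | /orP [/eqP -> |
  /orP [/eqP -> | /orP [/eqP -> | /orP [/eqP -> | /eqP -> ]]]]]]].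
all: first [ apply: cyc_U_all => //; fail | apply: cyc_U_even => // ].
Qed.

Definition pP (n i : nat) : bool :=
  (i %% 6 == 2) || (i %% 6 == 3) || ((n - 2 <= i) && (i %% 6 < 2)).
Definition Pset n := [set i : 'I_n | pP n i].

Lemma P_path_max n : 5 <= n -> maximal_open_packing (path_rel n) (Pset n).
Proof.
move=> n5; apply: maxI.
- apply/packingE => x y; rewrite !inE /pP path_conf.
  have := ltn_ord x; have := ltn_ord y; lia.
- move=> v; rewrite inE /pP => vP; have vn := ltn_ord v.
  case: (leqP 4 (v %% 6)) => h.
  + have pn : v - 2 < n by lia.
    exists (Ordinal pn); [rewrite inE /pP /=; lia | rewrite path_conf /=; lia].
  + have pn : v + 2 < n by lia.
    exists (Ordinal pn); [rewrite inE /pP /=; lia | rewrite path_conf /=; lia].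
Qed.

Lemma P_cyc_max n : 5 <= n -> maximal_open_packing (cycle_rel n) (Pset n).
Proof.
move=> n5; apply: maxI.
- apply/packingE => x y; rewrite !inE /pP cycle_conf; last lia.
  have := ltn_ord x; have := ltn_ord y; lia.
- move=> v; rewrite inE /pP => vP; have vn := ltn_ord v.
  case: (leqP 4 (v %% 6)) => h.
  + have pn : v - 2 < n by lia.
    exists (Ordinal pn); [rewrite inE /pP /=; lia | rewrite cycle_conf ?ord_neq /=; lia].
  + have pn : v + 2 < n by lia.
    exists (Ordinal pn); [rewrite inE /pP /=; lia | rewrite cycle_conf ?ord_neq /=; lia].
Qed.

Lemma c4E k : count (fun i => i %% 4 < 2) (iota 0 k) = 2 * (k %/ 4) + minn (k %% 4) 2.
Proof. elim: k => // k IH; rewrite count_iotaS IH /=; lia. Qed.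

Lemma c6E k : count (fun i => (i %% 6 == 2) || (i %% 6 == 3)) (iota 0 k) =
  2 * (k %/ 6) + minn (k %% 6 - 2) 2.
Proof. elim: k => // k IH; rewrite count_iotaS IH /=; lia. Qed.

Lemma count_tail (p : pred nat) n m : m <= n ->
  (forall i, i < m -> p i = false) ->
  count p (iota 0 n) = count p (iota m (n - m)).
Proof.
move=> mn H; have -> : n = m + (n - m) by lia.
rewrite iotaD count_cat add0n.
rewrite (@eq_in_count _ _ pred0); first by rewrite count_pred0 addKn.
by move=> i; rewrite mem_iota => /andP [_ h]; rewrite H.
Qed.

Lemma count_head (p : pred nat) n m : m <= n ->
  (forall i, m <= i -> p i = false) ->
  count p (iota 0 n) = count p (iota 0 m).
Proof.
move=> mn H; have -> : n = m + (n - m) by lia.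
rewrite iotaD count_cat add0n.
rewrite (@eq_in_count _ _ pred0 (iota m _)); first by rewrite count_pred0 addn0.
by move=> i; rewrite mem_iota => /andP [h _]; rewrite H.
Qed.

Lemma card_Pset n : 2 <= n ->
  #|Pset n| <= 2 * (n %/ 6) + minn (n %% 6 - 2) 2 + ((n - 2) %% 6 < 2) + ((n - 1) %% 6 < 2).
Proof.
move=> n2; rewrite /Pset (card_count n (pP n)).
have E := count_predUI (fun i => (i %% 6 == 2) || (i %% 6 == 3))
   (fun i => (n - 2 <= i) && (i %% 6 < 2)) (iota 0 n).
have -> : count (pP n) (iota 0 n) =
  count (predU (fun i => (i %% 6 == 2) || (i %% 6 == 3))
   (fun i => (n - 2 <= i) && (i %% 6 < 2))) (iota 0 n) by [].
rewrite c6E in E.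
rewrite (@count_tail (fun i => (n - 2 <= i) && (i %% 6 < 2)) n (n - 2)) in E; last 2 first.
- lia.
- move=> i h /=; lia.
have e2 : n - (n - 2) = 2 by lia.
move: E; rewrite e2 /=.
have -> : (n - 2).+1 = n - 1 by lia.
lia.
Qed.

Definition Qpath n := [set i : 'I_n | i %% 4 < 2].
Definition Qcyc n := [set i : 'I_n | (i %% 4 < 2) && (i + 2 < n)].

Lemma Qpath_pack n : open_packing (path_rel n) (Qpath n).
Proof.
apply/packingE => x y; rewrite !inE path_conf; lia.
Qed.

Lemma Qcyc_pack n : 3 <= n -> open_packing (cycle_rel n) (Qcyc n).
Proof.
move=> n3; apply/packingE => x y; rewrite !inE cycle_conf //.
have := ltn_ord x; have := ltn_ord y; lia.
Qed.

Lemma card_Qpath n : #|Qpath n| = 2 * (n %/ 4) + minn (n %% 4) 2.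
Proof. by rewrite /Qpath (card_count n (fun i => i %% 4 < 2)) c4E. Qed.

Lemma card_Qcyc n : 2 <= n -> #|Qcyc n| = 2 * ((n - 2) %/ 4) + minn ((n - 2) %% 4) 2.
Proof.
move=> n2; rewrite /Qcyc (card_count n (fun i => (i %% 4 < 2) && (i + 2 < n))).
rewrite (@count_head _ n (n - 2)); last 2 first.
- lia.
- move=> i h /=; lia.
rewrite -c4E; apply: eq_in_count => i; rewrite mem_iota /= => h; lia.
Qed.

Lemma path_not_U n : 5 <= n -> n != 8 -> ~ in_U (path_rel n).
Proof.
move=> n5 n8; apply: (not_in_U (P_path_max n5) (Qpath_pack n)).
apply: leq_ltn_trans (card_Pset _) _; first lia.
rewrite card_Qpath; lia.
Qed.

Lemma cyc_not_U n : 11 <= n -> n != 14 -> ~ in_U (cycle_rel n).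
Proof.
move=> n5 n8; apply: (not_in_U (P_cyc_max _) (Qcyc_pack _)); try lia.
apply: leq_ltn_trans (card_Pset _) _; first lia.
rewrite card_Qcyc; lia.
Qed.

Lemma cyc9_not_U : ~ in_U (cycle_rel 9).
Proof.
have Pm : maximal_open_packing (cycle_rel 9) [set i : 'I_9 | i %% 3 == 0].
  apply: maxI.
  - apply/packingE => x y; rewrite !inE cycle_conf //.
    have := ltn_ord x; have := ltn_ord y; lia.
  - move=> v; rewrite inE => vP; have vn := ltn_ord v.
    case: (leqP 2 (v %% 3)) => h.
    + have pn : v - 2 < 9 by lia.
      exists (Ordinal pn); [rewrite inE /=; lia | rewrite cycle_conf ?ord_neq /=; lia].
    + exists (Ordinal (ltn_pmod (v + 2) (isT : 0 < 9))).
      * rewrite inE /=; lia.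
      * rewrite cycle_conf ?ord_neq /=; lia.
apply: (not_in_U Pm (Qcyc_pack (isT : 3 <= 9))).
by rewrite card_Qcyc // (card_count 9 (fun i => i %% 3 == 0)).
Qed.

Theorem proposition2 :
  (forall n : nat, 0 < n ->
     (in_U (path_rel n) <-> n \in ([:: 1; 2; 3; 4; 8] : seq nat))) /\
  (forall n : nat, 3 <= n ->
     (in_U (cycle_rel n) <-> n \in ([:: 3; 4; 5; 6; 7; 8; 10; 14] : seq nat))).
Proof.
split.
- move=> n n0; split.
  + move=> HU; apply/negPn/negP => nin.
    apply: (path_not_U _ _ HU); move: nin; rewrite !inE; lia.
  + rewrite !inE => /orP [/eqP -> | /orP [/eqP -> | /orP [/eqP -> | /orP [/eqP -> | /eqP -> ]]]].
    * exact: path_in_U_1.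
    * exact: path_in_U_2.
    * exact: path_in_U_3.
    * exact: path_in_U_4.
    * exact: path_in_U_8.
- move=> n n3; split.
  + move=> HU; apply/negPn/negP => nin.
    case: (n =P 9) => [E | ne].
    * by move: HU; rewrite E => /cyc9_not_U.
    * apply: (cyc_not_U _ _ HU); move: nin; rewrite !inE; move/eqP: ne; lia.
  + exact: cyc_in_U.
Qed.
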